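(* Let $G$ be a $d$-regular graph of girth at least 7. Then for every integer $1\le k<d$ and every set $S$ of $k$ vertices, $|N^2(S)|\ge\frac{kd^2}{2}$.
   Context: For a set $S$ of vertices, $N^2(S)$ denotes the set of vertices at distance exactly 2 from some vertex of $S$ (not required to be disjoint from $S$). The girth is the length of a shortest cycle. *)

(* Defs.v *)
From mathcomp Require Import all_boot.
Set Implicit Arguments. Unset Strict Implicit. Unset Printing Implicit Defensive.

Definition simple_graph (T : finType) (e : rel T) : Prop :=
  symmetric e /\ irreflexive e.

Definition regular (T : finType) (e : rel T) (d : nat) : Prop :=
  forall v : T, #|[set w | e v w]| = d.

(* a cycle of the graph: a duplicate-free sequence of >= 3 vertices,
   consecutive ones (cyclically) adjacent; its length is its size *)
Definition graph_cycle (T : finType) (e : rel T) (s : seq T) : bool :=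
  [&& 3 <= size s, uniq s & cycle e s].

Definition girth_ge (T : finType) (e : rel T) (g : nat) : Prop :=
  forall s : seq T, graph_cycle e s -> g <= size s.

Definition dist2 (T : finType) (e : rel T) (u v : T) : bool :=
  [&& u != v, ~~ e u v & [exists w, e u w && e w v]].

Definition N2 (T : finType) (e : rel T) (S : {set T}) : {set T} :=
  [set v | [exists u in S, dist2 e u v]].

(* Main.v *)
Require Import Defs.
From mathcomp Require Import all_boot zify.
Set Implicit Arguments. Unset Strict Implicit. Unset Printing Implicit Defensive.

Lemma sumb_card (T : finType) (P : pred T) : \sum_x (P x : nat) = #|[set x | P x]|.
Proof. rewrite -sum1_card [RHS]big_mkcond /=; apply: eq_bigr => x _; by rewrite inE; case: (P x). Qed.

Section G.
Variables (T : finType) (e : rel T).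
Hypothesis sym : symmetric e.
Hypothesis irr : irreflexive e.
Hypothesis gir : girth_ge e 7.

Lemma eneq x y : e x y -> x != y.
Proof. by move=> H; apply/eqP=> E; move: H; rewrite E irr. Qed.

Lemma no3 x y z : e x y -> e y z -> e z x -> False.
Proof.
move=> a b c; suff: graph_cycle e [:: x; y; z] by move/gir.
by rewrite /graph_cycle /= !inE !negb_or a b c (eneq a) (eneq b) (eq_sym x z) (eneq c).
Qed.

Lemma no4 x y z t : e x y -> e y z -> e z t -> e t x -> x != z -> y != t -> False.
Proof.
move=> a b c d n1 n2; suff: graph_cycle e [:: x; y; z; t] by move/gir.
by rewrite /graph_cycle /= !inE !negb_or a b c d n1 n2 (eneq a) (eneq b) (eneq c) (eq_sym x t) (eneq d).
Qed.

Lemma no6 x1 x2 x3 x4 x5 x6 : e x1 x2 -> e x2 x3 -> e x3 x4 -> e x4 x5 -> e x5 x6 -> e x6 x1 ->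
  x1 != x3 -> x1 != x4 -> x1 != x5 -> x2 != x4 -> x2 != x5 -> x2 != x6 -> x3 != x5 -> x3 != x6 ->
  x4 != x6 -> False.
Proof.
move=> a b c d f g n1 n2 n3 n4 n5 n6 n7 n8 n9; suff: graph_cycle e [:: x1; x2; x3; x4; x5; x6] by move/gir.
by rewrite /graph_cycle /= !inE !negb_or a b c d f g n1 n2 n3 n4 n5 n6 n7 n8 n9 (eneq a) (eneq b) (eneq c) (eneq d) (eneq f) (eq_sym x1 x6) (eneq g).
Qed.

Variable d : nat.
Hypothesis reg : regular e d.

Lemma L1 u : d * (d - 1) <= #|[set v | dist2 e u v]|.
Proof.
have key: forall v, \sum_a ((e u a && e a v && (v != u)) : nat) <= dist2 e u v.
  move=> v; rewrite sumb_card.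
  have le1: #|[set a | e u a && e a v && (v != u)]| <= 1.
    apply/card_le1_eqP => a1 a2; rewrite !inE => /andP[/andP[h1 h2] h3] /andP[/andP[h4 h5] _].
    case: (eqVneq a1 a2) => [->|n] //; exfalso.
    by apply: (no4 h1 h2 _ _ _ n); rewrite 1?sym // eq_sym.
  case D: (dist2 e u v) => //.
  rewrite leqn0 cards_eq0; apply/eqP/setP => a; rewrite !inE; apply/negbTE/negP => /andP[/andP[h1 h2] h3].
  move: D; rewrite /dist2 eq_sym h3 /=.
  have ->: e u v = false.
    apply/negbTE/negP => h; by apply: (no3 h1 h2); rewrite sym.
  by rewrite /=; move/negbT/negP; apply; apply/existsP; exists a; rewrite h1 h2.

rewrite -sumb_card; apply: (@leq_trans (\sum_v \sum_a ((e u a && e a v && (v != u)) : nat))); last by apply: leq_sum => v _; exact: key.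
rewrite exchange_big /=.
have hh: forall a, \sum_v ((e u a && e a v && (v != u)) : nat) = (e u a) * (d - 1).
  move=> a; case: (boolP (e u a)) => h /=; last by rewrite big1 // => v _; rewrite (negbTE h).
  rewrite mul1n sumb_card.
  have := cardsD1 u [set v | e a v]; rewrite reg inE (sym a u) h => ->.
  rewrite add1n subSS subn0; apply: eq_card => v; rewrite !inE andbC.
  by [].
rewrite (eq_bigr _ (fun a _ => hh a)) -big_distrl /= sumb_card reg.
by [].
Qed.


Lemma L2 u u' : u != u' -> #|[set v | dist2 e u v && dist2 e u' v]| <= d.
Proof.
move=> nuu.
case: (boolP [exists w, e u w && e u' w]) => [/existsP[w /andP[uw u'w]]|hn].
  rewrite -(reg w); apply: subset_leq_card; apply/subsetP => v; rewrite !inE => /andP[D1 D2].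
  move: D1 => /and3P[nuv neuv /existsP[a /andP[ua av]]].
  move: D2 => /and3P[nu'v neu'v /existsP[b /andP[u'b bv]]].
  case: (eqVneq a w) => [<-|naw] //; exfalso.
  case: (eqVneq b w) => [ebw|nbw].
    subst b; by apply: (no4 ua av _ _ nuv naw); rewrite sym.
  case: (eqVneq a b) => [eab|nab].
    subst b; by apply: (no4 ua _ u'w _ nuu naw); rewrite sym.
  apply: (no6 ua av _ _ u'w _ nuv _ nuu nab _ naw _ _ nbw); rewrite 1?sym //.
  - apply/eqP => E; subst b; by apply: (@no3 u u' w) => //; rewrite sym.
  - apply/eqP => E; subst a; by rewrite av in neu'v.
  - by rewrite eq_sym.
  - apply/eqP => E; subst v; by rewrite uw in neuv.
have hn' : forall w, e u w -> e u' w -> False.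
  move=> w h1 h2; move/existsP: hn; apply; exists w; by rewrite h1.
apply: (@leq_trans (\sum_v \sum_a ((e u a && e a v && (dist2 e u v && dist2 e u' v)) : nat))).
  rewrite -sumb_card; apply: leq_sum => v _.
  case H: (dist2 e u v && dist2 e u' v) => //=.
  move/andP: (H) => [/and3P[_ _ /existsP[a /andP[ua av]]] _].
  by rewrite (bigD1 a) //= ua av /= add1n.
rewrite exchange_big /= -(reg u) -sumb_card; apply: leq_sum => a _.
case ua: (e u a); last by rewrite big1.
rewrite sumb_card; apply/card_le1_eqP => v1 v2; rewrite !inE /= => /andP[av1 /andP[D1 D2]] /andP[av2 /andP[D3 D4]].
move: D2 => /and3P[nu'v1 neu'v1 /existsP[b1 /andP[u'b1 b1v1]]].
move: D4 => /and3P[nu'v2 neu'v2 /existsP[b2 /andP[u'b2 b2v2]]].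
case: (eqVneq v1 v2) => [->|nv] //; exfalso.
have nab1 : a != b1 by apply/eqP => E; subst b1; exact: (hn' a).
case: (eqVneq b1 b2) => [eb|nb].
  subst b2; by apply: (no4 av1 _ b2v2 _ nab1 nv); rewrite sym.
apply: (no6 av1 _ _ u'b2 b2v2 _ nab1 _ _ _ _ nv nb _ _); rewrite 1?sym //.
- apply/eqP => E; subst a; by rewrite av1 in neu'v1.
- apply/eqP => E; subst b2; exact: (hn' a).
- by rewrite eq_sym.
- apply/eqP => E; subst v1; by rewrite u'b2 in neu'v1.
- apply/eqP => E; subst v2; by rewrite u'b1 in neu'v2.
Qed.

End G.
Lemma t1 n : 2 * n.+1 <= 2 + n.+1 * n.
Proof. have : n <= n * n by case: n => // n'; rewrite leq_pmulr. lia. Qed.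
Lemma t2 k d N : 1 <= k -> k < d -> 2 * (k * (d * (d - 1))) <= 2 * N + k * (k - 1) * d -> k * d ^ 2 <= 2 * N.
Proof.
move=> k1 kd H.
have h: k * (k - 1) * d <= k * (d - 2) * d.
  rewrite leq_mul2r leq_mul2l; apply/orP; right; apply/orP; right; lia.
case: d kd H h => [|[|D]] //; case: k k1 => [|K] // _ _.
rewrite !subSS !subn0 expnS expn1.
lia.
Qed.
Theorem lemma5 (T : finType) (e : rel T) (d : nat) :
  simple_graph e -> regular e d -> girth_ge e 7 ->
  forall (k : nat) (S : {set T}),
    1 <= k -> k < d -> #|S| = k ->
    k * d ^ 2 <= 2 * #|N2 e S|.
Proof.
move=> [sym irr] reg gir k S k1 kd cS.
pose m v := \sum_u ((u \in S) && dist2 e u v : nat).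
have cS' : #|[set x | x \in S]| = k by rewrite -cS; apply: eq_card => x; rewrite inE.
have s1: k * (d * (d - 1)) <= \sum_v m v.
  rewrite /m exchange_big /=.
  apply: (@leq_trans (\sum_u ((u \in S) * (d * (d - 1))))).
    by rewrite -big_distrl /= sumb_card cS'.
  apply: leq_sum => u _; case: (boolP (u \in S)) => h; last by rewrite mul0n.
  rewrite mul1n (eq_bigr (fun x => dist2 e u x : nat)) ?sumb_card; first exact: L1.
  by move=> x _.
have s2: \sum_v 2 * m v <= 2 * #|N2 e S| + \sum_v (m v * (m v - 1)).
  rewrite /N2 -sumb_card big_distrr -big_split /=; apply: leq_sum => v _.
  case E: [exists u in S, dist2 e u v].
    rewrite muln1; case: (m v) => [|n] //; rewrite subSS subn0; exact: t1.
  have -> : m v = 0.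
    rewrite /m big1 // => u _; case H: ((u \in S) && dist2 e u v) => //; move/andP: H => [h1 h2].
    suff: [exists u in S, dist2 e u v] by rewrite E.
    by apply/existsP; exists u; rewrite h1 h2.
  by [].
pose F v u u' := (u \in S) && (u' \in S) && (u' != u) && (dist2 e u v && dist2 e u' v).
have s3a: forall v, m v * (m v - 1) = \sum_u \sum_u' (F v u u' : nat).
  move=> v.
  have hu: forall u, \sum_u' (F v u u' : nat) = ((u \in S) && dist2 e u v) * (m v - 1).
    move=> u; case Hu: ((u \in S) && dist2 e u v); last first.
      rewrite mul0n big1 // => u' _; rewrite /F; move: Hu.
      by case: (u \in S); case: (dist2 e u v); rewrite ?andbF.
    move/andP: (Hu) => [h1 h2].
    rewrite mul1n /m [in RHS](bigD1 u) //= Hu add1n subSS subn0 [RHS]big_mkcond /=.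
    apply: eq_bigr => u' _; rewrite /F h1 h2 /=.
    by case: (u' \in S); case: (u' != u); case: (dist2 e u' v).
  by rewrite (eq_bigr _ (fun u _ => hu u)) -big_distrl.
have s3: \sum_v (m v * (m v - 1)) <= k * (k - 1) * d.
  rewrite (eq_bigr _ (fun v _ => s3a v)) exchange_big /=.
  apply: (@leq_trans (\sum_u \sum_u' (((u \in S) && (u' \in S) && (u' != u)) * d))).
    apply: leq_sum => u _; rewrite exchange_big /=; apply: leq_sum => u' _.
    case G: ((u \in S) && (u' \in S) && (u' != u)); last first.
      rewrite mul0n big1 // => v _; by rewrite /F G.
    rewrite mul1n sumb_card /F G /=; apply: L2 => //.
    by move/andP: G => [_ ]; rewrite eq_sym.
  have hu: forall u, \sum_u' (((u \in S) && (u' \in S) && (u' != u)) * d) = (u \in S) * ((k - 1) * d).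
    move=> u; rewrite -big_distrl /= mulnA; congr (_ * _).
    case h: (u \in S); last by rewrite big1.
    rewrite sumb_card mul1n.
    have := cardsD1 u S; rewrite h cS => ->; rewrite add1n subSS subn0.
    by apply: eq_card => x; rewrite !inE andbC.
  rewrite (eq_bigr _ (fun u _ => hu u)) -big_distrl /= sumb_card cS' mulnA.
  by [].
have s4 : 2 * (k * (d * (d - 1))) <= 2 * #|N2 e S| + k * (k - 1) * d.
  apply: leq_trans (leq_add (leqnn _) s3).
  apply: leq_trans s2.
  by rewrite -big_distrr leq_mul2l s1 orbT.
exact: t2 s4.
Qed.
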